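(* Fix constants $B>0$, $1\le\Gamma\le 3$, $0<\kappa\le 1$, and fixed Riemann data $\varrho_l>0$, $\varrho_r>0$, $\upsilon_l,\upsilon_r\ge 0$ with $\upsilon_r\le \upsilon_l-\frac{B}{\varrho_l^{\kappa}}$. For parameters $a>0$, $A>0$ (with $a<1/\max(\varrho_l,\varrho_r)$), let $p(\varrho)=A\left(\frac{\varrho}{1-a\varrho}\right)^{\Gamma}-\frac{B}{\varrho^{\kappa}}$, $p_l=p(\varrho_l)$, and let $\varrho_*=\varrho_*(a,A)\in(\varrho_l,1/a)$ be determined by $\upsilon_r=-p(\varrho_* )+\upsilon_l+p_l$. Then $$\lim_{a,A\to 0} A\left(\frac{\varrho_*}{1-a\varrho_*}\right)^{\Gamma}=\upsilon_l-\upsilon_r-\frac{B}{\varrho_l^{\kappa}}.$$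
   Context: $\varrho_*$ is the intermediate density of the shock-plus-contact-discontinuity Riemann solution of the system $\varrho_t+(\varrho\upsilon)_x=0$, $(\varrho(\upsilon+p))_t+(\varrho\upsilon(\upsilon+p))_x=0$ with Riemann data $(\varrho_l,\upsilon_l)$ for $x<0$ and $(\varrho_r,\upsilon_r)$ for $x>0$: the shock connects $(\varrho_l,\upsilon_l)$ to $(\varrho_*,\upsilon_r)$ and the contact discontinuity connects $(\varrho_*,\upsilon_r)$ to $(\varrho_r,\upsilon_r)$. The limit $a,A\to0$ is taken with $B,\Gamma,\kappa$ and the data fixed. *)

(* Defs.v *)
From Stdlib Require Import Reals.
Open Scope R_scope.

Definition pres (a A B Gam kap rho : R) : R :=
  A * Rpower (rho / (1 - a * rho)) Gam - B / Rpower rho kap.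

(* Main.v *)
Require Import Defs.
From Stdlib Require Import Reals Lra.
Open Scope R_scope.

Lemma Rpower_pos' x y : 0 < Rpower x y.
Proof. unfold Rpower; apply exp_pos. Qed.

Lemma frac_le a r M : 0 < r -> 0 < M -> r <= M -> 0 < a -> a * (2*M) < 1 ->
  0 < r / (1 - a*r) <= 2*M.
Proof.
  intros Hr HM HrM Ha H.
  assert (Ha' : a * r <= a * M) by (apply Rmult_le_compat_l; lra).
  assert (Hd : 1/2 < 1 - a*r) by lra.
  split.
  - apply Rdiv_lt_0_compat; lra.
  - apply Rle_trans with (r / (1/2)).
    + unfold Rdiv; apply Rmult_le_compat_l; [lra|].
      apply Rinv_le_contravar; lra.
    + replace (r / (1/2)) with (2*r) by field. lra.
Qed.

Theorem lemma3p2
  (B Gam kap rl rr ul ur : R)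
  (HB : 0 < B) (HG1 : 1 <= Gam) (HG3 : Gam <= 3)
  (Hk0 : 0 < kap) (Hk1 : kap <= 1)
  (Hrl : 0 < rl) (Hrr : 0 < rr) (Hul : 0 <= ul) (Hur : 0 <= ur)
  (Hdata : ur <= ul - B / Rpower rl kap)
  (rstar : R -> R -> R)
  (Hrstar : forall a A, 0 < a -> 0 < A -> a < / Rmax rl rr ->
     rl < rstar a A /\ rstar a A < / a /\
     ur = - pres a A B Gam kap (rstar a A) + ul + pres a A B Gam kap rl) :
  forall eps, 0 < eps -> exists delta, 0 < delta /\
    forall a A, 0 < a -> 0 < A -> a < / Rmax rl rr ->
      a < delta -> A < delta ->
      Rabs (A * Rpower (rstar a A / (1 - a * rstar a A)) Gam
            - (ul - ur - B / Rpower rl kap)) < eps.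
Proof.
  intros eps Heps.
  set (M := Rpower (2*B/eps) (/kap) + rl).
  assert (HM : 0 < M) by (generalize (Rpower_pos' (2*B/eps) (/kap)); unfold M; lra).
  assert (HrlM : rl <= M) by (generalize (Rpower_pos' (2*B/eps) (/kap)); unfold M; lra).
  set (PM := Rpower M kap).
  assert (HPM : 2*B/eps < PM).
  { unfold PM. assert (H2 : 0 < 2*B/eps) by (apply Rdiv_lt_0_compat; lra).
    replace (2*B/eps) with (Rpower (Rpower (2*B/eps) (/kap)) kap) at 1.
    - apply Rlt_Rpower_l; [lra|]. split; [apply Rpower_pos'|]. unfold M; lra.
    - rewrite Rpower_mult. replace (/kap*kap) with 1 by (field; lra).
      apply Rpower_1; lra. }
  assert (HPM0 : 0 < PM) by apply Rpower_pos'.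
  assert (HBPM : B / PM < eps/2).
  { apply (Rmult_lt_reg_r PM); [lra|]. unfold Rdiv at 1.
    rewrite Rmult_assoc, Rinv_l by lra.
    assert (2*B < PM*eps).
    { apply (Rmult_lt_reg_r (/eps)). apply Rinv_0_lt_compat; lra.
      replace (PM*eps*/eps) with PM by (field; lra). exact HPM. }
    lra. }
  set (Q := Rpower (2*M) Gam).
  assert (HQ : 0 < Q) by apply Rpower_pos'.
  set (X0 := Rpower (2*rl) Gam).
  assert (HX0 : 0 < X0) by apply Rpower_pos'.
  exists (Rmin (/(2*M)) (Rmin (B/(PM*Q)) (eps/(2*X0)))).
  split.
  { repeat apply Rmin_pos.
    - apply Rinv_0_lt_compat; lra.
    - apply Rdiv_lt_0_compat; [lra|]. apply Rmult_lt_0_compat; lra.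
    - apply Rdiv_lt_0_compat; lra. }
  intros a A Ha HA Hamax Had HAd.
  assert (Ha1 : a < /(2*M)) by (eapply Rlt_le_trans; [exact Had| apply Rmin_l]).
  assert (HA2 : A < B/(PM*Q)) by (eapply Rlt_le_trans; [exact HAd|];
     eapply Rle_trans; [apply Rmin_r| apply Rmin_l]).
  assert (HA3 : A < eps/(2*X0)) by (eapply Rlt_le_trans; [exact HAd|];
     eapply Rle_trans; [apply Rmin_r| apply Rmin_r]).
  assert (Ha1' : a * (2*M) < 1).
  { apply (Rmult_lt_reg_r (/(2*M))). apply Rinv_0_lt_compat; lra.
    rewrite Rmult_assoc, Rinv_r, Rmult_1_l, Rmult_1_r by lra. exact Ha1. }
  assert (HA2' : A * Q < B / PM).
  { apply (Rmult_lt_reg_r PM); [lra|]. replace (B/PM*PM) with B by (field; lra).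
    replace (A*Q*PM) with (A * (PM*Q)) by ring.
    apply (Rmult_lt_reg_r (/(PM*Q))). apply Rinv_0_lt_compat; nra.
    rewrite Rmult_assoc, Rinv_r, Rmult_1_r by nra. exact HA2. }
  assert (HA3' : A * X0 < eps/2).
  { apply (Rmult_lt_reg_r (/X0)). apply Rinv_0_lt_compat; lra.
    rewrite Rmult_assoc, Rinv_r, Rmult_1_r by lra.
    replace (eps/2*/X0) with (eps/(2*X0)) by (field; lra). exact HA3. }
  destruct (Hrstar a A Ha HA Hamax) as [Hr1 [Hr2 Heq]].
  set (r := rstar a A) in *.
  unfold pres in Heq.
  set (X := Rpower (r / (1 - a * r)) Gam) in *.
  set (Xl := Rpower (rl / (1 - a * rl)) Gam) in *.
  set (Pr := Rpower r kap) in *.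
  set (Pl := Rpower rl kap) in *.
  assert (HPr : 0 < Pr) by apply Rpower_pos'.
  assert (HXl0 : 0 < Xl) by apply Rpower_pos'.
  assert (HXl : Xl <= X0).
  { unfold Xl, X0. apply Rle_Rpower_l; [lra|]. apply frac_le; try lra. nra. }
  assert (HAXl : A * Xl <= A * X0) by (apply Rmult_le_compat_l; lra).
  assert (HBPr0 : 0 < B / Pr) by (apply Rdiv_lt_0_compat; lra).
  assert (HrM : M < r).
  { destruct (Rle_lt_dec r M) as [Hle|Hlt]; [exfalso|exact Hlt].
    assert (HX : X <= Q).
    { unfold X, Q. apply Rle_Rpower_l; [lra|]. apply frac_le; lra. }
    assert (HPrM : Pr <= PM).
    { unfold Pr, PM. apply Rle_Rpower_l; lra. }
    assert (HB1 : B / PM <= B / Pr).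
    { unfold Rdiv. apply Rmult_le_compat_l; [lra|]. apply Rinv_le_contravar; lra. }
    assert (HAX : A * X <= A * Q) by (apply Rmult_le_compat_l; lra).
    assert (HXpos : 0 < A * Xl) by (apply Rmult_lt_0_compat; lra).
    lra. }
  assert (HPr2 : PM < Pr) by (unfold PM, Pr; apply Rlt_Rpower_l; lra).
  assert (HB2 : B / Pr < B / PM).
  { unfold Rdiv. apply Rmult_lt_compat_l; [lra|]. apply Rinv_lt_contravar; nra. }
  assert (HXpos : 0 < A * Xl) by (apply Rmult_lt_0_compat; lra).
  apply Rabs_def1; lra.
Qed.
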